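(* Let $(Y,\rho)$ be an infinite compact metric space, let $f:\{0,1\}^{\mathbb{N}}\to Y$ be a continuous surjection, let $\mathcal{D}_f=\{f^{-1}(y):y\in Y\}$ and $h:Y\to\mathcal{D}_f$, $h(y)=f^{-1}(y)$. Suppose $G:\{0,1\}^{\mathbb{N}}\to\{0,1\}^{\mathbb{N}}$ is a continuous onto map which is chaotic and satisfies $G(D)\in\mathcal{D}_f$ for every $D\in\mathcal{D}_f$, and let $H:\mathcal{D}_f\to\mathcal{D}_f$, $H(D)=G(D)$. Then $h$ is a homeomorphism onto $(\mathcal{D}_f,\tau(\mathcal{D}_f))$ and $F=h^{-1}\circ H\circ h:Y\to Y$ is a continuous onto map that is chaotic on $Y$.
   Context: $\{0,1\}^{\mathbb{N}}$ carries the product topology of the discrete topology on $\{0,1\}$, metrized by $d(\psi,\varphi)=\sum_{i\ge1}|\psi(i)-\varphi(i)|/2^i$. The decomposition topology on $\mathcal{D}_f$ is $\{\mathcal{U}\subset\mathcal{D}_f:\bigcup\mathcal{U}\text{ open}\}$. A map $g$ on a metric space $(Z,d)$ is chaotic (Devaney) if it is onto, topologically transitive (for nonempty open $U,V$ there is $n>0$ with $g^n(U)\cap V\neq\emptyset$), has a dense set of periodic points, and is sensitive to initial conditions (there is $\eta>0$ such that for every $x$ and neighbourhood $N$ of $x$ there are $y\in N$, $n\ge0$ with $d(g^n(x),g^n(y))>\eta$). *)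

(* Defs.v *)
From Stdlib Require Import Reals Lra List ClassicalEpsilon.
Open Scope R_scope.

Definition is_metric {X : Type} (d : X -> X -> R) : Prop :=
  (forall x y, 0 <= d x y) /\
  (forall x y, d x y = 0 <-> x = y) /\
  (forall x y, d x y = d y x) /\
  (forall x y z, d x z <= d x y + d y z).

Definition ball {X : Type} (d : X -> X -> R) (x : X) (r : R) : X -> Prop :=
  fun y => d x y < r.

Definition metric_open {X : Type} (d : X -> X -> R) (U : X -> Prop) : Prop :=
  forall x, U x -> exists eps, 0 < eps /\ forall y, ball d x eps y -> U y.

Definition nbhd {X : Type} (d : X -> X -> R) (x : X) (N : X -> Prop) : Prop :=
  exists V, metric_open d V /\ V x /\ (forall y, V y -> N y).

Definition metric_compact {X : Type} (d : X -> X -> R) : Prop :=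
  forall (I : Type) (U : I -> X -> Prop),
    (forall i, metric_open d (U i)) ->
    (forall x, exists i, U i x) ->
    exists l : list I, forall x, exists i, In i l /\ U i x.

Definition infinite_type (X : Type) : Prop :=
  forall l : list X, exists x, ~ In x l.

Definition metric_continuous {X Z : Type} (dX : X -> X -> R) (dZ : Z -> Z -> R)
  (g : X -> Z) : Prop :=
  forall x eps, 0 < eps -> exists delta, 0 < delta /\
    forall y, dX x y < delta -> dZ (g x) (g y) < eps.

Definition onto {X Z : Type} (g : X -> Z) : Prop := forall z, exists x, g x = z.

Definition top_transitive {X : Type} (d : X -> X -> R) (g : X -> X) : Prop :=
  forall U V, metric_open d U -> metric_open d V ->
    (exists x, U x) -> (exists x, V x) ->
    exists n, (0 < n)%nat /\ exists x, U x /\ V (Nat.iter n g x).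

Definition periodic_point {X : Type} (g : X -> X) (p : X) : Prop :=
  exists n, (0 < n)%nat /\ Nat.iter n g p = p.

Definition dense_periodic {X : Type} (d : X -> X -> R) (g : X -> X) : Prop :=
  forall x eps, 0 < eps -> exists p, periodic_point g p /\ d x p < eps.

Definition sensitive {X : Type} (d : X -> X -> R) (g : X -> X) : Prop :=
  exists eta, 0 < eta /\ forall x N, nbhd d x N ->
    exists y n, N y /\ d (Nat.iter n g x) (Nat.iter n g y) > eta.

Definition chaotic {X : Type} (d : X -> X -> R) (g : X -> X) : Prop :=
  onto g /\ top_transitive d g /\ dense_periodic d g /\ sensitive d g.

(* Sequences psi(1), psi(2), ... are encoded as c : nat -> bool with c i = psi(i+1). *)
Definition cantor := nat -> bool.
Definition b2R (b : bool) : R := if b then 1 else 0.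
Definition cantor_term (p q : cantor) (i : nat) : R :=
  Rabs (b2R (p i) - b2R (q i)) / 2 ^ (S i).
Definition is_cantor_metric (d : cantor -> cantor -> R) : Prop :=
  forall p q, infinite_sum (cantor_term p q) (d p q).

Definition fiber {Y : Type} (f : cantor -> Y) (y : Y) : cantor -> Prop :=
  fun x => f x = y.

Definition Dspace {Y : Type} (f : cantor -> Y) : Type :=
  { D : cantor -> Prop | exists y, D = fiber f y }.

Definition h_map {Y : Type} (f : cantor -> Y) (y : Y) : Dspace f :=
  exist _ (fiber f y) (ex_intro _ y eq_refl).

Definition image_set {X : Type} (g : X -> X) (D : X -> Prop) : X -> Prop :=
  fun x => exists z, D z /\ g z = x.

Definition decomp_open {Y : Type} (d : cantor -> cantor -> R) (f : cantor -> Y)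
  (U : Dspace f -> Prop) : Prop :=
  metric_open d (fun x => exists D : Dspace f, U D /\ proj1_sig D x).

Definition maps_fibers {Y : Type} (f : cantor -> Y) (G : cantor -> cantor) : Prop :=
  forall D : Dspace f, exists D' : Dspace f, image_set G (proj1_sig D) = proj1_sig D'.

Definition H_map {Y : Type} (f : cantor -> Y) (G : cantor -> cantor)
  (HG : maps_fibers f G) (D : Dspace f) : Dspace f :=
  proj1_sig (constructive_indefinite_description _ (HG D)).

Definition bijective {A B : Type} (g : A -> B) : Prop :=
  (forall a a', g a = g a' -> a = a') /\ (forall b, exists a, g a = b).

Definition homeomorphism {A B : Type} (openA : (A -> Prop) -> Prop)
  (openB : (B -> Prop) -> Prop) (g : A -> B) : Prop :=
  bijective g /\
  (forall V, openB V -> openA (fun a => V (g a))) /\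
  (forall U, openA U -> openB (fun b => exists a, U a /\ g a = b)).

(* Main.v *)
Require Import Defs.
From Stdlib Require Import Reals.
Open Scope R_scope.
From Stdlib Require Import Reals Lra Lia Arith List Classical ClassicalEpsilon ProofIrrelevance.

Lemma finmin (P : nat -> R -> Prop) (n : nat) :
  (forall i, (i < n)%nat -> exists e, 0 < e /\ forall e', 0 < e' -> e' <= e -> P i e') ->
  exists e, 0 < e /\ forall e', 0 < e' -> e' <= e -> forall i, (i < n)%nat -> P i e'.
Proof.
  induction n as [|n IH]; intros H.
  - exists 1; split; [lra| intros; lia].
  - destruct IH as [e1 [He1 H1]]. { intros i Hi; apply H; lia. }
    destruct (H n (Nat.lt_succ_diag_r n)) as [e2 [He2 H2]].
    exists (Rmin e1 e2). split. { apply Rmin_case; lra. }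
    intros e' He' Hle i Hi. pose proof (Rmin_l e1 e2). pose proof (Rmin_r e1 e2).
    destruct (Nat.eq_dec i n) as [->|Hne].
    + apply H2; lra.
    + apply H1; try lra; lia.
Qed.

Lemma iter_period {X} (g : X -> X) n p : Nat.iter n g p = p ->
  forall k, Nat.iter (k * n) g p = p.
Proof.
  intros Hp k; induction k as [|k IH]; [reflexivity|].
  replace (S k * n)%nat with (n + k * n)%nat by lia.
  rewrite Nat.iter_add, IH; exact Hp.
Qed.

Lemma iter_mod {X} (g : X -> X) n p : (0 < n)%nat -> Nat.iter n g p = p ->
  forall m, Nat.iter m g p = Nat.iter (m mod n) g p.
Proof.
  intros Hn Hp m. pose proof (Nat.div_mod m n ltac:(lia)) as Hm.
  transitivity (Nat.iter (n * (m / n) + m mod n) g p); [f_equal; exact Hm|].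
  rewrite Nat.add_comm, Nat.iter_add. f_equal.
  rewrite Nat.mul_comm. apply iter_period; auto.
Qed.

Section Metric.
Variable Y : Type.
Variable rho : Y -> Y -> R.
Hypothesis Hrho : is_metric rho.

Lemma rho_nonneg x y : 0 <= rho x y. Proof. apply Hrho. Qed.
Lemma rho_refl x : rho x x = 0. Proof. apply Hrho; reflexivity. Qed.
Lemma rho_sym x y : rho x y = rho y x. Proof. apply Hrho. Qed.
Lemma rho_tri x y z : rho x z <= rho x y + rho y z. Proof. apply Hrho. Qed.
Lemma rho_pos x y : x <> y -> 0 < rho x y.
Proof. intros H. destruct (rho_nonneg x y) as [h|h]; auto.
  exfalso; apply H; apply Hrho; auto. Qed.

Lemma ball_open x r : metric_open rho (ball rho x r).
Proof.
  intros y Hy. unfold ball in *. exists (r - rho x y). split; [lra|].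
  intros z Hz. pose proof (rho_tri x y z). lra.
Qed.

Lemma iter_cont (F : Y -> Y) : metric_continuous rho rho F ->
  forall n, metric_continuous rho rho (Nat.iter n F).
Proof.
  intros HF n; induction n as [|n IH]; intros x eps He.
  - exists eps; split; auto.
  - destruct (HF (Nat.iter n F x) eps He) as [d1 [Hd1 H1]].
    destruct (IH x d1 Hd1) as [d2 [Hd2 H2]].
    exists d2; split; auto. intros y Hy. simpl. apply H1, H2, Hy.
Qed.

Lemma iter_cont_fin (F : Y -> Y) : metric_continuous rho rho F ->
  forall n q eta, 0 < eta -> exists delta, 0 < delta /\
   forall z, rho q z < delta -> forall i, (i < n)%nat ->
     rho (Nat.iter i F q) (Nat.iter i F z) < eta.
Proof.
  intros HF n q eta Heta.
  destruct (finmin (fun i e => forall z, rho q z < e -> rho (Nat.iter i F q) (Nat.iter i F z) < eta) n)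
    as [e [He He']].
  { intros i Hi. destruct (iter_cont F HF i q eta Heta) as [d [Hd H]].
    exists d; split; auto. intros e' _ Hle z Hz. apply H; lra. }
  exists e; split; auto. intros z Hz i Hi. apply (He' e); auto; lra.
Qed.

Lemma banks (F : Y -> Y) : infinite_type Y -> metric_continuous rho rho F ->
  top_transitive rho F -> dense_periodic rho F -> sensitive rho F.
Proof.
  intros Hinf HF Htr Hdp.
  destruct (Hinf nil) as [y0 _].
  destruct (Hdp y0 1 Rlt_0_1) as [q1 [[n1 [Hn1 Hq1]] _]].
  destruct (Hinf (map (fun i => Nat.iter i F q1) (seq 0 n1))) as [z Hz].
  assert (Hzi : forall i, Nat.iter i F q1 <> z).
  { intros i Heq. apply Hz. rewrite (iter_mod F n1 q1 Hn1 Hq1) in Heq.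
    rewrite <- Heq. apply (in_map (fun i => Nat.iter i F q1)). apply in_seq. pose proof (Nat.mod_upper_bound i n1). lia. }
  destruct (finmin (fun i e => e <= rho z (Nat.iter i F q1)) n1) as [e [He He']].
  { intros i _. exists (rho z (Nat.iter i F q1)). split.
    - apply rho_pos. intro E; apply (Hzi i); auto.
    - intros; lra. }
  destruct (Hdp z e He) as [q2 [[n2 [Hn2 Hq2]] Hzq2]].
  assert (Hq2n : forall i, Nat.iter i F q1 <> q2).
  { intros i E. assert (Hl := He' e He (Rle_refl e) (i mod n1) (Nat.mod_upper_bound i n1 ltac:(lia))).
    rewrite <- (iter_mod F n1 q1 Hn1 Hq1), E in Hl. lra. }
  assert (Hdis : forall i j, Nat.iter i F q1 <> Nat.iter j F q2).
  { intros i j E. apply (Hq2n ((n2 * (j+1) - j) + i)%nat).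
    rewrite Nat.iter_add, E, <- Nat.iter_add.
    replace (n2 * (j + 1) - j + j)%nat with ((j+1) * n2)%nat by nia.
    apply iter_period; auto. }
  destruct (finmin (fun i e => forall j, (j < n2)%nat -> e <= rho (Nat.iter i F q1) (Nat.iter j F q2)) n1)
    as [d0 [Hd0 Hd0']].
  { intros i Hi.
    destruct (finmin (fun j e => e <= rho (Nat.iter i F q1) (Nat.iter j F q2)) n2) as [e2 [He2 He2']].
    { intros j _. exists (rho (Nat.iter i F q1) (Nat.iter j F q2)). split.
      - apply rho_pos, Hdis.
      - intros; lra. }
    exists e2; split; [auto| exact He2']. }
  assert (Hd0all : forall i j, d0 <= rho (Nat.iter i F q1) (Nat.iter j F q2)).
  { intros i j. rewrite (iter_mod F n1 q1 Hn1 Hq1 i), (iter_mod F n2 q2 Hn2 Hq2 j).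
    apply (Hd0' d0); auto; try lra; apply Nat.mod_upper_bound; lia. }
  set (eta := d0 / 8).
  assert (Horb : forall x, exists q, periodic_point F q /\ forall i, 4 * eta <= rho x (Nat.iter i F q)).
  { intros x. destruct (classic (exists i, rho x (Nat.iter i F q1) < 4 * eta)) as [[i Hi]|Hn].
    - exists q2. split. { exists n2; auto. }
      intros j. apply Rnot_lt_le. intro Hj.
      pose proof (rho_tri (Nat.iter i F q1) x (Nat.iter j F q2)).
      rewrite (rho_sym (Nat.iter i F q1) x) in H. pose proof (Hd0all i j). unfold eta in *. lra.
    - exists q1. split. { exists n1; auto. }
      intros i. apply Rnot_lt_le. intro Hi. apply Hn; eauto. }
  exists eta. split. { unfold eta; lra. }
  intros x N [V [HV [Vx HVN]]].
  destruct (HV x Vx) as [eps [Heps HeV]].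
  set (r := Rmin eps eta).
  assert (Hr : 0 < r /\ r <= eps /\ r <= eta).
  { unfold r; split; [apply Rmin_case; unfold eta in *; lra| split; [apply Rmin_l|apply Rmin_r]]. }
  destruct (Hdp x r ltac:(lra)) as [p [[n [Hn Hp]] Hxp]].
  destruct (Horb x) as [q [_ Hq]].
  destruct (iter_cont_fin F HF (S n) q eta ltac:(unfold eta; lra)) as [delta [Hdelta Hdel]].
  destruct (Htr (ball rho x r) (ball rho q delta) (ball_open x r) (ball_open q delta))
    as [k [Hk [y [Hy Hyk]]]].
  { exists x. unfold ball. rewrite rho_refl. lra. }
  { exists q. unfold ball. rewrite rho_refl. lra. }
  unfold ball in Hy, Hyk.
  set (i := (n - k mod n)%nat).
  assert (Hi : (i < S n)%nat) by (unfold i; lia).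
  set (m := (i + k)%nat).
  assert (Hm : Nat.iter m F p = p).
  { unfold m, i. pose proof (Nat.div_mod k n ltac:(lia)). pose proof (Nat.mod_upper_bound k n ltac:(lia)).
    replace (n - k mod n + k)%nat with ((k / n + 1) * n)%nat by nia. apply iter_period; auto. }
  assert (Hmy : rho (Nat.iter i F q) (Nat.iter m F y) < eta).
  { unfold m. rewrite Nat.iter_add. apply Hdel; auto. }
  assert (HNp : N p). { apply HVN, HeV. unfold ball. lra. }
  assert (HNy : N y). { apply HVN, HeV. unfold ball. lra. }
  destruct (classic (rho (Nat.iter m F x) (Nat.iter m F p) > eta)) as [H1|H1].
  { exists p, m; auto. }
  destruct (classic (rho (Nat.iter m F x) (Nat.iter m F y) > eta)) as [H2|H2].
  { exists y, m; auto. }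
  exfalso. rewrite Hm in H1.
  pose proof (Hq i).
  pose proof (rho_tri x p (Nat.iter i F q)).
  pose proof (rho_tri p (Nat.iter m F y) (Nat.iter i F q)).
  pose proof (rho_tri p (Nat.iter m F x) (Nat.iter m F y)).
  rewrite (rho_sym p (Nat.iter m F x)) in H4.
  rewrite (rho_sym (Nat.iter m F y) (Nat.iter i F q)) in H3.
  lra.
Qed.
End Metric.

Definition agree (k : nat) (a b : cantor) := forall i, (i < k)%nat -> a i = b i.
Definition infm (s : nat -> cantor) (c : cantor) (k : nat) :=
  forall N, exists n, (N <= n)%nat /\ agree k (s n) c.
Definition ext (c : cantor) (k : nat) (b : bool) : cantor :=
  fun i => if Nat.ltb i k then c i else b.

Lemma infm_ext s c k : infm s c k -> infm s (ext c k true) (S k) \/ infm s (ext c k false) (S k).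
Proof.
  intros H. apply NNPP; intro Hn. apply not_or_and in Hn as [H1 H2].
  apply not_all_ex_not in H1 as [N1 H1]. apply not_all_ex_not in H2 as [N2 H2].
  destruct (H (Nat.max N1 N2)) as [n [Hn Ha]].
  assert (Hb : forall b, agree (S k) (s n) (ext c k b) <-> s n k = b).
  { intros b; split.
    - intros A. rewrite (A k (Nat.lt_succ_diag_r k)). unfold ext. rewrite Nat.ltb_irrefl. auto.
    - intros E i Hi. unfold ext. destruct (Nat.ltb_spec i k).
      + apply Ha; auto.
      + replace i with k by lia. auto. }
  destruct (s n k) eqn:E.
  - apply H1. exists n. split; [lia|]. apply Hb; auto.
  - apply H2. exists n. split; [lia|]. apply Hb; auto.
Qed.

Section Clus.
Variable s : nat -> cantor.
Definition stepc (c : cantor) (k : nat) : cantor :=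
  if excluded_middle_informative (infm s (ext c k true) (S k)) then ext c k true else ext c k false.
Fixpoint gc (k : nat) : cantor :=
  match k with O => fun _ => false | S k => stepc (gc k) k end.
Definition xc : cantor := fun i => gc (S i) i.

Lemma gc_inf k : infm s (gc k) k.
Proof.
  induction k as [|k IH].
  - intros N. exists N. split; auto. intros i Hi; lia.
  - simpl. unfold stepc. destruct (excluded_middle_informative _) as [h|h]; auto.
    destruct (infm_ext s _ _ IH); tauto.
Qed.

Lemma gc_stable i m : (S i <= m)%nat -> gc m i = gc (S i) i.
Proof.
  induction m as [|m IH]; intros H; [lia|].
  destruct (Nat.eq_dec (S i) (S m)) as [E|E]; [rewrite E; auto|].
  simpl gc at 1. unfold stepc.
  assert (Hl : Nat.ltb i m = true) by (apply Nat.ltb_lt; lia).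
  destruct (excluded_middle_informative _); unfold ext; rewrite Hl; apply IH; lia.
Qed.

Lemma cluster k : infm s xc k.
Proof.
  intros N. destruct (gc_inf k N) as [n [Hn Ha]]. exists n. split; auto.
  intros i Hi. rewrite Ha by auto. unfold xc. apply gc_stable. lia.
Qed.
End Clus.

Lemma Un_cv_le (u : nat -> R) l M : Un_cv u l -> (forall n, u n <= M) -> l <= M.
Proof.
  intros H HM. apply Rnot_lt_le. intro Hl.
  destruct (H (l - M) ltac:(lra)) as [N HN].
  specialize (HN N (le_n N)). specialize (HM N). unfold R_dist in HN.
  apply Rabs_def2 in HN. lra.
Qed.

Lemma b2R_diff a b : Rabs (b2R a - b2R b) <= 1.
Proof. destruct a, b; simpl; apply Rabs_le; lra. Qed.

Lemma cantor_agree_bound d : is_cantor_metric d -> forall k p q, agree k p q -> d p q <= / 2 ^ k.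
Proof.
  intros Hd k p q A. apply (Un_cv_le (sum_f_R0 (cantor_term p q))); [apply Hd|].
  assert (Hterm : forall i, cantor_term p q i = 0 \/ ((k <= i)%nat /\ 0 <= cantor_term p q i <= / 2 ^ S i)).
  { intros i. unfold cantor_term. destruct (Nat.ltb_spec i k).
    - left. rewrite (A i) by auto. rewrite Rminus_diag, Rabs_R0. unfold Rdiv; ring.
    - right. split; auto. pose proof (b2R_diff (p i) (q i)). pose proof (Rabs_pos (b2R (p i) - b2R (q i))).
      assert (0 < 2 ^ S i) by (apply pow_lt; lra). unfold Rdiv. split.
      + apply Rmult_le_pos; auto. left; apply Rinv_0_lt_compat; auto.
      + rewrite <- (Rmult_1_l (/ 2 ^ S i)) at 2. apply Rmult_le_compat_r; auto.
        left; apply Rinv_0_lt_compat; auto. }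
  assert (Hpk : 0 < 2 ^ k) by (apply pow_lt; lra).
  assert (Hc : forall n, sum_f_R0 (cantor_term p q) n + (if Nat.leb k n then / 2 ^ S n else / 2 ^ k) <= / 2 ^ k
                          /\ ((n < k)%nat -> sum_f_R0 (cantor_term p q) n = 0)).
  { induction n as [|n [IH1 IH2]].
    - simpl. destruct (Hterm 0%nat) as [E|[Hk [H0 H1]]].
      + rewrite E. destruct (Nat.leb_spec k 0).
        * replace k with 0%nat in * by lia. simpl in *. split; [lra| lia].
        * split; [lra| auto].
      + replace k with 0%nat in * by lia. simpl in *. split; [lra|lia].
    - simpl sum_f_R0. destruct (Hterm (S n)) as [E|[Hk [H0 H1]]].
      + rewrite E. destruct (Nat.leb_spec k (S n)).
        * destruct (Nat.leb_spec k n).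
          -- assert (/ 2 ^ S (S n) <= / 2 ^ S n).
             { apply Rinv_le_contravar; [apply pow_lt; lra|]. apply Rle_pow; [lra|lia]. }
             split; [lra| lia].
          -- replace k with (S n) in * by lia. rewrite IH2 by lia.
             assert (/ 2 ^ S (S n) <= / 2 ^ S n) by (apply Rinv_le_contravar; [apply pow_lt; lra|]; apply Rle_pow; [lra|lia]).
             split; [lra|lia].
        * rewrite IH2 by lia. split; [lra| intros; lra].
      + destruct (Nat.leb_spec k (S n)); [|lia].
        assert (E2 : / 2 ^ S (S n) + / 2 ^ S (S n) = / 2 ^ S n).
        { simpl. field. apply pow_nonzero; lra. }
        destruct (Nat.leb_spec k n).
        * split; [lra|lia].
        * replace k with (S n) in * by lia. rewrite IH2 by lia. split; [lra|lia]. }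
  intros n. destruct (Hc n) as [H _].
  assert (0 < / 2 ^ S n) by (apply Rinv_0_lt_compat, pow_lt; lra).
  assert (0 < / 2 ^ k) by (apply Rinv_0_lt_compat; auto).
  destruct (Nat.leb_spec k n); lra.
Qed.

Lemma small_pow eps : 0 < eps -> exists k, / 2 ^ k < eps.
Proof.
  intros He. destruct (pow_lt_1_zero (/ 2) ltac:(rewrite Rabs_pos_eq; lra) eps He) as [N HN].
  exists N. specialize (HN N (le_n N)). rewrite pow_inv in HN.
  rewrite Rabs_pos_eq in HN; auto. left; apply Rinv_0_lt_compat, pow_lt; lra.
Qed.

Lemma pow_inv_mono n N : (N <= n)%nat -> / 2 ^ n <= / 2 ^ N.
Proof. intros H. apply Rinv_le_contravar; [apply pow_lt; lra|]. apply Rle_pow; [lra|lia]. Qed.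

Lemma agree_sym k a b : agree k a b -> agree k b a.
Proof. intros H i Hi; symmetry; auto. Qed.

Lemma quotient (Y : Type) (rho : Y -> Y -> R) d f :
  is_cantor_metric d -> is_metric rho -> metric_continuous d rho f -> onto f ->
  forall A, metric_open d (fun x => A (f x)) -> metric_open rho A.
Proof.
  intros Hd Hrho Hfc Hfo A HA y Ay. apply NNPP; intro Hno.
  assert (Hpt : forall n, exists x, rho y (f x) < / 2 ^ n /\ ~ A (f x)).
  { intros n. apply NNPP; intro Hn. apply Hno. exists (/ 2 ^ n). split.
    { apply Rinv_0_lt_compat, pow_lt; lra. }
    intros z Hz. destruct (Hfo z) as [x <-]. apply NNPP; intro HAn. apply Hn; eauto. }
  set (s n := proj1_sig (constructive_indefinite_description _ (Hpt n))).
  assert (Hs : forall n, rho y (f (s n)) < / 2 ^ n /\ ~ A (f (s n))).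
  { intros n. unfold s. destruct (constructive_indefinite_description _ _); auto. }
  set (x := xc s).
  assert (Hfx : f x = y).
  { apply NNPP; intro Hne. assert (He : 0 < rho y (f x)) by (apply rho_pos; auto).
    set (e := rho y (f x)) in *.
    destruct (Hfc x (e/2) ltac:(lra)) as [delta [Hdel Hc]].
    destruct (small_pow delta Hdel) as [k Hk].
    destruct (small_pow (e/2) ltac:(lra)) as [N HN].
    destruct (cluster s k N) as [n [Hn Ha]].
    pose proof (cantor_agree_bound d Hd k x (s n) (agree_sym _ _ _ Ha)).
    specialize (Hc (s n) ltac:(lra)).
    destruct (Hs n) as [H1 _]. pose proof (pow_inv_mono n N Hn).
    pose proof (rho_tri Y rho Hrho y (f (s n)) (f x)) as T.
    rewrite (rho_sym Y rho Hrho (f (s n)) (f x)) in T. unfold e in *. lra. }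
  rewrite <- Hfx in Ay. destruct (HA x Ay) as [eps [Heps Hb]].
  destruct (small_pow eps Heps) as [k Hk].
  destruct (cluster s k 0%nat) as [n [_ Ha]].
  pose proof (cantor_agree_bound d Hd k x (s n) (agree_sym _ _ _ Ha)).
  apply (proj2 (Hs n)). apply Hb. unfold ball. lra.
Qed.

Lemma open_ext {X} (d : X -> X -> R) (P Q : X -> Prop) :
  (forall x, P x <-> Q x) -> metric_open d P -> metric_open d Q.
Proof.
  intros E HP x Qx. destruct (HP x (proj2 (E x) Qx)) as [e [He H]].
  exists e; split; auto. intros y Hy; apply E, H, Hy.
Qed.

Lemma cont_preimage {X Z} dX dZ (g : X -> Z) U :
  metric_continuous dX dZ g -> metric_open dZ U -> metric_open dX (fun x => U (g x)).
Proof.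
  intros Hg HU x Ux. destruct (HU (g x) Ux) as [e [He H]].
  destruct (Hg x e He) as [dl [Hdl H2]]. exists dl; split; auto.
  intros y Hy. apply H, H2, Hy.
Qed.

Lemma h_eq {Y} (f : cantor -> Y) (D : Dspace f) y : proj1_sig D = fiber f y -> h_map f y = D.
Proof.
  destruct D as [P pf]; simpl; intro E; subst P. unfold h_map. f_equal. apply proof_irrelevance.
Qed.

Lemma union_char {Y} (f : cantor -> Y) (V : Dspace f -> Prop) x :
  (exists D : Dspace f, V D /\ proj1_sig D x) <-> V (h_map f (f x)).
Proof.
  split.
  - intros [D [VD Dx]]. destruct D as [P [y Ey]] eqn:ED. simpl in Dx.
    rewrite <- ED in VD.
    assert (Hf : f x = y) by (rewrite Ey in Dx; exact Dx).
    rewrite Hf. rewrite (h_eq f D y); auto. rewrite ED; simpl; auto.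
  - intros HV. exists (h_map f (f x)). split; auto. simpl. unfold fiber. reflexivity.
Qed.

Theorem mainTheorem7 (Y : Type) (rho : Y -> Y -> R)
  (d : cantor -> cantor -> R) (f : cantor -> Y) (G : cantor -> cantor)
  (Hd : is_cantor_metric d)
  (Hrho : is_metric rho) (Hcomp : metric_compact rho) (Hinf : infinite_type Y)
  (Hfc : metric_continuous d rho f) (Hfo : onto f)
  (HGc : metric_continuous d d G) (HGo : onto G) (HGch : chaotic d G)
  (HG : maps_fibers f G) :
  homeomorphism (metric_open rho) (decomp_open d f) (h_map f) /\
  (exists F : Y -> Y, forall y, h_map f (F y) = H_map f G HG (h_map f y)) /\
  (forall F : Y -> Y, (forall y, h_map f (F y) = H_map f G HG (h_map f y)) ->
     metric_continuous rho rho F /\ onto F /\ chaotic rho F).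
Proof.
  split; [|split].
  - split; [split|split].
    + intros a a' E. apply (f_equal (@proj1_sig _ _)) in E. simpl in E.
      destruct (Hfo a) as [x Hx].
      assert (Hx' : fiber f a x) by exact Hx. rewrite E in Hx'. unfold fiber in Hx'. congruence.
    + intros D. destruct (proj2_sig D) as [y Ey]. exists y. apply h_eq; auto.
    + intros V HV. apply (quotient Y rho d f Hd Hrho Hfc Hfo).
      unfold decomp_open in HV. eapply open_ext; [|exact HV].
      intros x; apply union_char.
    + intros U HU. unfold decomp_open. eapply open_ext; [|exact (cont_preimage d rho f U Hfc HU)].
      intros x; simpl. split.
      * intros Ux. exists (h_map f (f x)). split; [exists (f x); auto| simpl; reflexivity].
      * intros [D [[y [Uy <-]] Dx]]. simpl in Dx. unfold fiber in Dx. rewrite Dx; auto.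
  - assert (Hch : forall y, exists y', proj1_sig (H_map f G HG (h_map f y)) = fiber f y').
    { intros y. exact (proj2_sig (H_map f G HG (h_map f y))). }
    exists (fun y => proj1_sig (constructive_indefinite_description _ (Hch y))).
    intros y. apply h_eq. destruct (constructive_indefinite_description _ (Hch y)); simpl; auto.
  - intros F HF.
    assert (Hsemi : forall x, f (G x) = F (f x)).
    { intros x. pose proof (f_equal (@proj1_sig _ _) (HF (f x))) as E. simpl in E.
      unfold H_map in E.
      destruct (constructive_indefinite_description _ (HG (h_map f (f x)))) as [D' HD'].
      simpl in E, HD'. rewrite <- E in HD'.
      assert (Hi : image_set G (fiber f (f x)) (G x)) by (exists x; split; reflexivity).
      rewrite HD' in Hi. exact Hi. }
    assert (Hit : forall n x, f (Nat.iter n G x) = Nat.iter n F (f x)).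
    { intros n x. apply Nat.iter_swap_gen. exact Hsemi. }
    assert (HFc : metric_continuous rho rho F).
    { intros y eps He.
      assert (Ho : metric_open rho (fun z => ball rho (F y) eps (F z))).
      { apply (quotient Y rho d f Hd Hrho Hfc Hfo).
        eapply open_ext with (P := fun x => ball rho (F y) eps (f (G x))).
        { intros x; rewrite Hsemi; tauto. }
        apply (cont_preimage d d G (fun x => ball rho (F y) eps (f x)) HGc).
        apply (cont_preimage d rho f _ Hfc). apply ball_open; auto. }
      destruct (Ho y) as [dl [Hdl H]].
      { unfold ball. rewrite rho_refl; auto. }
      exists dl; split; [auto|]. intros z Hz. apply (H z Hz). }
    destruct HGch as [_ [Htr [Hdp _]]].
    assert (Htr' : top_transitive rho F).
    { intros U V HU HV [u Uu] [v Vv].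
      destruct (Hfo u) as [xu <-]. destruct (Hfo v) as [xv <-].
      destruct (Htr (fun x => U (f x)) (fun x => V (f x)) (cont_preimage d rho f U Hfc HU)
        (cont_preimage d rho f V Hfc HV) (ex_intro _ xu Uu) (ex_intro _ xv Vv)) as [n [Hn [x [Ux Vx]]]].
      exists n. split; auto. exists (f x). split; auto. rewrite <- Hit; auto. }
    assert (Hdp' : dense_periodic rho F).
    { intros y eps He. destruct (Hfo y) as [x <-].
      destruct (Hfc x eps He) as [dl [Hdl H]].
      destruct (Hdp x dl Hdl) as [p [[n [Hn Hp]] Hxp]].
      exists (f p). split; [exists n; split; auto; rewrite <- Hit, Hp; auto| apply H; auto]. }
    assert (HFo : onto F).
    { intros z. destruct (Hfo z) as [x <-]. destruct (HGo x) as [x' <-].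
      exists (f x'). symmetry; apply Hsemi. }
    split; [auto| split; [auto|]].
    split; [auto| split; [auto| split; [auto|]]].
    apply banks; auto.
Qed.
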